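(* In the $\mathsf{CD}^\star$ model, there is a deterministic algorithm that computes a $(2,\log N)$-ruling set of the network using $O(N)$ time and $O(\log N)$ energy, and using only 1-bit messages.
   Context: Radio network: connected undirected graph $G$; synchronized slots; each vertex transmits, listens or idles per slot, transmit/listen costing one unit of energy (energy = maximum per-vertex number of such slots). The $\mathsf{CD}^\star$ model: a listener hears silence if no neighbor transmits, and if at least one neighbor transmits it receives the message of one of the transmitting neighbors (arbitrarily chosen if several transmit). Deterministic setting: vertices have distinct IDs in $\{1,\ldots,N\}$. An $(\alpha,\beta)$-ruling set of $G$ is a set $I$ of vertices such that (i) $\mathrm{dist}(u,v)\ge\alpha$ for all distinct $u,v\in I$, and (ii) for every vertex $u$ there is $v\in I$ with $\mathrm{dist}(u,v)\le\beta$. *)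

(* Defs.v *)
From mathcomp Require Import all_boot.
Set Implicit Arguments. Unset Strict Implicit. Unset Printing Implicit Defensive.

Inductive Action := Transmit of bool | Listen | Idle.

(* What a vertex observes in a slot: nothing (it transmitted or idled),
   silence, or a heard 1-bit message. *)
Inductive Obs := ONone | OSilence | OHeard of bool.

(* A deterministic algorithm: every vertex knows N and its own ID; its action
   in a slot is a function of N, its ID and its history of observations
   (whose length is the current slot index). *)
Record Algo := {
  act : nat -> nat -> seq Obs -> Action;
  rounds : nat -> nat;
  out : nat -> nat -> seq Obs -> bool }.

Definition is_transmit (a : Action) : bool :=
  if a is Transmit _ then true else false.
Definition payload (a : Action) : bool :=
  if a is Transmit b then b else false.
Definition is_active (a : Action) : bool :=
  if a is Idle then false else true.

Section Exec.
Variables (A : Algo) (N : nat) (T : finType) (e : rel T) (id : T -> nat).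
(* The CD* adversary: in slot r, a listener v whose set S of transmitting
   neighbours is nonempty receives the message of [adv r v S] (required to be
   in S, see [valid_adv]). *)
Variable adv : nat -> T -> {set T} -> T.

Fixpoint hist (r : nat) : T -> seq Obs :=
  match r with
  | 0 => fun _ => [::]
  | r'.+1 => fun v =>
      let a := fun u => act A N (id u) (hist r' u) in
      let o :=
        match a v with
        | Listen =>
            let S := [set u | e v u && is_transmit (a u)] in
            if S == set0 then OSilence else OHeard (payload (a (adv r' v S)))
        | _ => ONone
        end in
      rcons (hist r' v) o
  end.

Definition vertex_energy (v : T) : nat :=
  \sum_(r < rounds A N) is_active (act A N (id v) (hist r v)).
Definition energy : nat := \max_(v : T) vertex_energy v.

Definition output_set : {set T} :=
  [set v | out A N (id v) (hist (rounds A N) v)].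
End Exec.

Definition valid_adv (T : finType) (adv : nat -> T -> {set T} -> T) : Prop :=
  forall r v (S : {set T}), S != set0 -> adv r v S \in S.

Definition dist_le (T : finType) (e : rel T) (k : nat) (u v : T) : Prop :=
  exists p : seq T, [/\ path e u p, last u p = v & size p <= k].

Definition ruling_set (T : finType) (e : rel T) (alpha beta : nat)
    (I : {set T}) : Prop :=
  (forall u v, u \in I -> v \in I -> u != v -> ~ dist_le e alpha.-1 u v) /\
  (forall u, exists2 v, v \in I & dist_le e beta u v).

Definition connected_graph (T : finType) (e : rel T) : Prop :=
  forall u v : T, connect e u v.

(* Main.v *)
Require Import Defs.
From mathcomp Require Import all_boot.
From mathcomp Require Import zify.
Set Implicit Arguments. Unset Strict Implicit. Unset Printing Implicit Defensive.

Definition heard (o : Obs) : bool := if o is OHeard _ then true else false.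
Definition cand (h : seq Obs) : bool := ~~ has heard h.
Definition bit (i r : nat) : bool := odd (i.-1 %/ 2 ^ r).

Definition myact (N i : nat) (h : seq Obs) : Action :=
  if (size h < up_log 2 N) && cand h then
    (if bit i (size h) then Listen else Transmit true)
  else Idle.

Definition myalgo : Algo :=
  {| act := myact; rounds := fun N => up_log 2 N; out := fun _ _ h => cand h |}.

Lemma size_hist N (T : finType) (e : rel T) id adv r v :
  size (hist myalgo N e id adv r v) = r.
Proof.
elim: r v => [|r IH] v //=.
by rewrite size_rcons IH.
Qed.

Lemma cand_step N (T : finType) (e : rel T) id adv r v :
  r < up_log 2 N ->
  cand (hist myalgo N e id adv r.+1 v) =
  cand (hist myalgo N e id adv r v) &&
  (~~ bit (id v) r ||
   ~~ [exists u, e v u && cand (hist myalgo N e id adv r u) && ~~ bit (id u) r]).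
Proof.
move=> hr /=.
rewrite /cand has_rcons negb_or -/(cand _).
rewrite /myact /= !size_hist hr /=.
case C: (cand _) => //=.
case B: (bit (id v) r) => //=.
set S := [set u | _].
have -> : (S == set0) = ~~ [exists u, e v u && cand (hist myalgo N e id adv r u)
           && ~~ bit (id u) r].
  apply/idP/idP.
  - move/eqP=> S0; apply/existsP=> [[u /andP[/andP[evu cu] bu]]].
    have : u \in S by rewrite inE evu size_hist hr cu /= (negbTE bu).
    by rewrite S0 inE.
  - move=> /existsPn H; apply/eqP/setP=> u; rewrite !inE size_hist hr.
    have := H u; case: (e v u) => //=; case: (cand _) => //=.
    by case: (bit _ _).
rewrite andbT /cand; move: [exists _, _] => b; by case: b.
Qed.

Lemma cand_mono N (T : finType) (e : rel T) id adv r s v :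
  r <= s -> cand (hist myalgo N e id adv s v) -> cand (hist myalgo N e id adv r v).
Proof.
move=> /subnK <-; elim: (s - r) => [|d IH] //= H.
apply: IH; move: H; rewrite /cand has_rcons negb_or => /andP[] //.
Qed.

Lemma bits_eq k x y : x < 2 ^ k -> y < 2 ^ k ->
  (forall r, r < k -> odd (x %/ 2 ^ r) = odd (y %/ 2 ^ r)) -> x = y.
Proof.
elim: k x y => [|k IH] x y.
  by rewrite expn0; case: x; case: y.
move=> hx hy H.
have h0 := H 0 isT; rewrite !expn0 !divn1 in h0.
have hh : x./2 = y./2.
  apply: IH.
  - rewrite expnS in hx; rewrite -divn2; lia.
  - rewrite expnS in hy; rewrite -divn2; lia.
  move=> r hr; have := H r.+1 hr.
  by rewrite expnS !divnMA !divn2.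
by rewrite -(odd_double_half x) -(odd_double_half y) h0 hh.
Qed.

Lemma dist_cons (T : finType) (e : rel T) d v u w :
  e v u -> dist_le e d u w -> dist_le e d.+1 v w.
Proof.
move=> evu [p [hp hl hs]]; exists (u :: p); split => //=.
by rewrite evu hp.
Qed.

Lemma dist_weak (T : finType) (e : rel T) d d' v w :
  d <= d' -> dist_le e d v w -> dist_le e d' v w.
Proof.
move=> hd [p [hp hl hs]]; exists p; split => //; exact: leq_trans hs hd.
Qed.

Theorem lemma15 :
  exists (A : Algo) (c : nat),
    forall N : nat,
      rounds A N <= c * N + c /\
      forall (T : finType) (e : rel T) (id : T -> nat)
             (adv : nat -> T -> {set T} -> T),
        symmetric e -> irreflexive e -> connected_graph e ->
        injective id -> (forall v, 1 <= id v <= N) ->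
        valid_adv adv ->
        energy A N e id adv <= c * up_log 2 N + c /\
        ruling_set e 2 (up_log 2 N) (output_set A N e id adv).
Proof.
exists myalgo, 1 => N; split.
  rewrite /= mul1n; apply: leq_trans (leq_addr _ _).
  apply: up_log_min => //; exact: ltnW (ltn_expl _ _).
move=> T e id adv esym eirr _ idinj idr _.
set k := up_log 2 N.
split.
  rewrite mul1n; apply: leq_trans (leq_addr _ _).
  apply/bigmax_leqP => v _; rewrite /vertex_energy /=.
  apply: (@leq_trans (\sum_(r < up_log 2 N) 1)).
    by apply: leq_sum => i _; exact: leq_b1.
  by rewrite sum_nat_const card_ord muln1.
have outE v : (v \in output_set myalgo N e id adv) = cand (hist myalgo N e id adv k v).
  by rewrite inE.
split.
- move=> u v; rewrite !outE => cu cv uv [p [hp hl hs]].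
  case: p hp hl hs => [|w [|]] //=.
    by move=> _ ul; rewrite ul eqxx in uv.
  move=> Hp wv _; have euw : e u w by move: Hp; case: (e u w).
  subst v; clear Hp.
  have nid : id u != id w by apply/eqP => /idinj /eqP; rewrite (negbTE uv).
  have [r hr hb] : exists2 r, r < k & bit (id u) r != bit (id w) r.
    suff /existsP[r hb] : [exists r : 'I_k, bit (id u) r != bit (id w) r].
      by exists r.
    apply: contraR nid => /existsPn H; apply/eqP.
    have hu := idr u; have hw := idr w.
    have hN : N <= 2 ^ k := up_logP N (isT : 1 < 2).
    have : (id u).-1 = (id w).-1.
      apply: (@bits_eq k); [lia|lia|].
      move=> r hr; have := H (Ordinal hr); rewrite negbK => /eqP.
      by rewrite /bit.
    lia.
  wlog : u w cu cv uv euw nid hb / bit (id u) r.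
    move=> Hw; case bu: (bit (id u) r); first exact: (Hw u w cu cv uv euw nid hb bu).
    apply: (Hw w u cv cu).
    + by rewrite eq_sym.
    + by rewrite esym.
    + by rewrite eq_sym.
    + by rewrite eq_sym.
    + by move: hb; rewrite bu; case: (bit _ _).
  move=> bu.
  have bw : ~~ bit (id w) r by move: hb; rewrite bu; case: (bit _ _).
  have := cand_mono (hr : r.+1 <= k) cu.
  rewrite cand_step // bu /= (cand_mono (ltnW hr) cu) /=.
  move/negP; apply; apply/existsP; exists w.
  by rewrite euw (cand_mono (ltnW hr) cv) bw.
- have key : forall d j v, j + d = k -> cand (hist myalgo N e id adv j v) ->
      exists2 w, w \in output_set myalgo N e id adv & dist_le e d v w.
    elim=> [|d IH] j v hjd cv.
      exists v; first by rewrite outE -hjd addn0.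
      by exists [::].
    have hj : j < k by lia.
    case cv1: (cand (hist myalgo N e id adv j.+1 v)).
      have [w hw hd] := IH j.+1 v ltac:(lia) cv1.
      by exists w => //; apply: dist_weak hd.
    move: cv1; rewrite cand_step // cv /= => /negbT; rewrite negb_or !negbK => /andP[_ /existsP[u]].
    move=> /andP[/andP[evu cu] bu].
    have cu1 : cand (hist myalgo N e id adv j.+1 u) by rewrite cand_step // cu bu.
    have [w hw hd] := IH j.+1 u ltac:(lia) cu1.
    by exists w => //; apply: dist_cons evu hd.
  move=> u; exact: (key k 0 u (add0n _)).
Qed.
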